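(* Let $n\in\mathbb{N}$ and $a,b\in\mathbb{C}$ with $b\notin\mathbb{Z}^-$. (i) If $a\neq b+1$, then \[ \sum_{j=0}^{n}\sum_{i=0}^{j}\frac{\binom{n+a+1}{i}}{\binom{n+b}{j}}(-1)^{i-j}=\frac{1}{a-b-1}\left(\frac{(a)_{n+1}}{(b+1)_n}-n-b-1\right); \] in particular for $a=b$ the sum equals $n+1$. (ii) If $a=b+1$, then \[ \sum_{j=0}^{n}\sum_{i=0}^{j}\frac{\binom{n+b+2}{i}}{\binom{n+b}{j}}(-1)^{i-j}=(n+b+1)\big(\psi(n+b+2)-\psi(b+1)\big)=(n+b+1)\sum_{k=1}^{n+1}\frac{1}{b+k}. \]
   Context: For $x\in\mathbb{C}$, $i\in\mathbb{N}$: $\binom{x}{i}=x(x-1)\cdots(x-i+1)/i!$. $\mathbb{Z}^-=\{-1,-2,\dots\}$. Pochhammer symbol: $(\alpha)_0=1$, $(\alpha)_k=\alpha(\alpha+1)\cdots(\alpha+k-1)$. $\psi=\Gamma'/\Gamma$ is the digamma function. *)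

(* Defs.v *)
(* Complex numbers are modelled by an arbitrary
   numClosedFieldType (e.g. algC). *)
From HB Require Import structures.
From mathcomp Require Import all_boot all_order all_algebra.
Set Implicit Arguments. Unset Strict Implicit. Unset Printing Implicit Defensive.
Import Order.TTheory GRing.Theory Num.Theory.
Local Open Scope ring_scope.

Definition gbinom {R : fieldType} (x : R) (i : nat) : R :=
  (\prod_(k < i) (x - k%:R)) / (i`!)%:R.

Definition poch {R : ringType} (alpha : R) (k : nat) : R :=
  \prod_(m < k) (alpha + m%:R).

(* the double sum of the theorem, with upper parameter x (= n+a+1) *)
Definition dsum {R : fieldType} (n : nat) (x b : R) : R :=
  \sum_(j < n.+1) \sum_(i < j.+1)
     gbinom x i / gbinom (n%:R + b) j * (-1) ^+ (j - i).

(* Main.v *)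
Require Import Defs.
From HB Require Import structures.
From mathcomp Require Import all_boot all_order all_algebra.
From mathcomp Require Import ring.
Import Order.TTheory GRing.Theory Num.Theory.
Local Open Scope ring_scope.

Definition ff {R : fieldType} (x : R) (i : nat) : R := \prod_(k < i) (x - k%:R).

Lemma ffS (R : fieldType) (x : R) i : ff x i.+1 = ff x i * (x - i%:R).
Proof. by rewrite /ff big_ord_recr. Qed.

Lemma ff_neq0 (R : fieldType) (x : R) m :
  (forall k, (k < m)%N -> x - k%:R != 0) -> ff x m != 0.
Proof.
elim: m => [|m IH] H; first by rewrite /ff big_ord0 oner_eq0.
rewrite ffS mulf_neq0 //; first by apply: IH => k hk; apply: H; exact: ltnW.
exact: H.
Qed.

Lemma gbinomE (R : fieldType) (x : R) i : gbinom x i = ff x i / (i`!)%:R.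
Proof. by []. Qed.

Lemma pascal (C : numClosedFieldType) (x : C) j :
  gbinom x j.+1 = gbinom (x - 1) j.+1 + gbinom (x - 1) j.
Proof.
have hf : forall i, (i`!)%:R != 0 :> C by move=> i; rewrite pnatr_eq0 -lt0n fact_gt0.
rewrite !gbinomE.
have -> : ff x j.+1 = x * ff (x - 1) j.
  rewrite /ff big_ord_recl /= subr0; congr (_ * _); apply: eq_bigr => i _.
  by rewrite /bump /= -addn1 natrD opprD addrA addrAC.
rewrite ffS factS natrM.
have := hf j; move: (j`!)%:R => f hf'.
have hj : (j.+1)%:R != 0 :> C by rewrite pnatr_eq0.
field; rewrite hf' /= addrC natr1 //.
Qed.


Lemma altsum (C : numClosedFieldType) (x : C) j :
  \sum_(i < j.+1) gbinom x i * (-1) ^+ (j - i) = gbinom (x - 1) j.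
Proof.
elim: j => [|j IH].
  by rewrite big_ord1 /= expr0 mulr1 /gbinom !big_ord0.
rewrite big_ord_recr /= subnn expr0 mulr1.
rewrite (eq_bigr (fun i : 'I_j.+1 => - (gbinom x i * (-1) ^+ (j - i)))); last first.
  move=> i _; rewrite subSn; last by rewrite -ltnS ltn_ord.
  by rewrite exprS mulN1r mulrN.
by rewrite sumrN IH pascal addrC addrK.
Qed.

Lemma dsumE (C : numClosedFieldType) n (x b : C) :
  dsum n x b = \sum_(j < n.+1) ff (x - 1) j / ff (n%:R + b) j.
Proof.
apply: eq_bigr => j _.
rewrite (eq_bigr (fun i : 'I_j.+1 => gbinom x i * (-1) ^+ (j - i) / gbinom (n%:R + b) j)); last first.
  by move=> i _; rewrite mulrAC.
rewrite -mulr_suml altsum !gbinomE invf_div mulrA divfK //.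
by rewrite pnatr_eq0 -lt0n fact_gt0.
Qed.

Lemma telesc (R : fieldType) (A B : R) m :
  (forall k, (k < m)%N -> B - k%:R != 0) ->
  \sum_(j < m.+1) ff A j / ff B j * (A - B - 1) = ff A m.+1 / ff B m - (B + 1).
Proof.
elim: m => [|m IH] H.
  by rewrite big_ord1 /ff !big_ord1 !big_ord0 /= !subr0 divr1 mul1r divr1 opprD addrA.
rewrite big_ord_recr /= IH; last by move=> k hk; apply: H; exact: ltnW.
have h1 : ff B m != 0 by apply: ff_neq0 => k hk; apply: H; exact: ltnW.
have h2 : B - m%:R != 0 by apply: H.
rewrite !ffS -natr1. field. by rewrite h1 h2.
Qed.

Lemma ratio (R : fieldType) (A : R) j :
  (forall k, (k <= j)%N -> A - k%:R != 0) -> ff A j / ff (A - 1) j = A / (A - j%:R).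
Proof.
elim: j => [|j IH] H.
  have h0 := H 0%N (leqnn 0); rewrite subr0 in h0.
  by rewrite /ff !big_ord0 subr0 divr1 divff.
have h1 : ff (A - 1) j != 0.
  apply: ff_neq0 => k hk; have := H k.+1 (ltnW hk).
  by rewrite -natr1 opprD addrA addrAC.
have h2 : A - j%:R != 0 by apply: H; exact: leqnSn.
have h3 : A - 1 - j%:R != 0.
  by have := H j.+1 (leqnn _); rewrite -natr1 opprD addrA addrAC.
have h4 : A - j.+1%:R = A - 1 - j%:R by rewrite -natr1 opprD addrA addrAC.
rewrite !ffS invfM mulrACA IH; last by move=> k hk; apply: H; exact: (leq_trans hk).
rewrite h4; field; by rewrite h2 h3.
Qed.

Lemma ff_rev (R : fieldType) (u : R) N :
  ff u N = \prod_(k < N) (u - N%:R + k.+1%:R).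
Proof.
rewrite /ff (reindex_inj rev_ord_inj); apply: eq_bigr => k _ /=.
rewrite natrB ?ltn_ord //; ring.
Qed.

Lemma prod_neq0 (R : fieldType) N (F : 'I_N -> R) :
  (forall i, F i != 0) -> \prod_(i < N) F i != 0.
Proof.
move=> H; apply: (big_ind (fun x => x != 0)) => //; first exact: oner_neq0.
by move=> x y hx hy; rewrite mulf_neq0.
Qed.

Theorem mainTheorem11 (C : numClosedFieldType) (n : nat) (a b : C)
  (hb : forall m : nat, b != - (m.+1)%:R) :
  (a != b + 1 ->
     dsum n (n%:R + a + 1) b
     = (a - b - 1)^-1 * (poch a n.+1 / poch (b + 1) n - n%:R - b - 1))
  /\ (a = b -> dsum n (n%:R + a + 1) b = n.+1%:R)
  /\ (a = b + 1 ->
     dsum n (n%:R + b + 2) b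
     = (n%:R + b + 1) * \sum_(k < n.+1) (b + k.+1%:R)^-1).
Proof.
have hb' : forall m : nat, b + m.+1%:R != 0 by move=> m; rewrite addr_eq0.
have hpoch : poch (b + 1) n != 0.
  by apply: prod_neq0 => i; rewrite -addrA (addrC 1) natr1 hb'.
have partI : a != b + 1 -> dsum n (n%:R + a + 1) b
     = (a - b - 1)^-1 * (poch a n.+1 / poch (b + 1) n - n%:R - b - 1).
  move=> hab.
  have hab' : a - b - 1 != 0.
    by apply: contra hab => /eqP h; rewrite -subr_eq0 opprD addrA h.
  rewrite dsumE addrK.
  have HB : forall k, (k < n)%N -> n%:R + b - k%:R != 0.
    move=> k hk.
    have -> : n%:R + b - k%:R = b + (n - k.+1).+1%:R.
      by rewrite subnSK // natrB ?(ltnW hk) //; ring.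
    exact: hb'.
  have := @telesc _ (n%:R + a) (n%:R + b) n HB.
  have -> : n%:R + a - (n%:R + b) - 1 = a - b - 1 by ring.
  rewrite -mulr_suml => h; apply: (mulIf hab'); rewrite h.
  have -> : ff (n%:R + a) n.+1 = poch a n.+1.
    rewrite ff_rev; apply: eq_bigr => k _; rewrite -natr1; ring.
  have -> : ff (n%:R + b) n = poch (b + 1) n.
    rewrite ff_rev; apply: eq_bigr => k _; rewrite -natr1; ring.
  field; by rewrite hab' hpoch.
split; first exact: partI.
split.
  move=> hab; rewrite partI; last first.
    by rewrite hab -subr_eq0 opprD addrA subrr sub0r oppr_eq0 oner_eq0.
  rewrite hab /poch big_ord_recl addr0.
  have -> : \prod_(i < n) (b + (bump 0 i)%:R) = poch (b + 1) n.
    by apply: eq_bigr => i _; rewrite /bump /= -natr1; ring.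
  rewrite mulfK // -natr1; field.
  rewrite (_ : b - b - 1 = -1); first by rewrite oppr_eq0 oner_eq0.
  ring.
move=> hab; rewrite dsumE.
set A := n%:R + b + 1.
have hA : forall k, (k <= n)%N -> A - k%:R = b + (n - k).+1%:R.
  by move=> k hk; rewrite /A -natr1 natrB //; ring.
have -> : n%:R + b + 2 - 1 = A by rewrite /A; ring.
have -> : n%:R + b = A - 1 by rewrite /A; ring.
rewrite (eq_bigr (fun j : 'I_n.+1 => A / (A - j%:R))); last first.
  move=> j _; apply: ratio => k hk.
  rewrite hA; first exact: hb'.
  exact: (leq_trans hk (ltnSE (ltn_ord j))).
rewrite mulr_sumr (reindex_inj rev_ord_inj); apply: eq_bigr => j _ /=.
by rewrite hA ?subSS ?leq_subr // subKn // -ltnS ltn_ord.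
Qed.
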